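(* Let $q$ be a prime power and let $B$ be a blocking set in the three-dimensional Möbius geometry $\Sigma(\mathbb{F}_q,\mathbb{F}_{q^3})$. Then $\#B\ge 2q^2-q-2$. Furthermore, $\#B\ge 2q^2-q-1$ for $q\ge 4$, $\#B\ge 2q^2-q$ for $q\ge 7$, and $\#B\ge 2q^2-q+1$ for $q\ge 19$.
   Context: For a field $F$ and a subfield $K$, the projective line $\mathbb{P}(F)$ is the set of submodules $F(a,b)$ of $F^2$ with $(a,b)\neq(0,0)$ (equivalently, $(a\ b)$ is the first row of an invertible $2\times2$ matrix); $\mathbb{P}(K)$ is embedded in $\mathbb{P}(F)$ via $K(a,b)\mapsto F(a,b)$. The chain geometry $\Sigma(K,F)$ has point set $\mathbb{P}(F)$ and its blocks, called chains, are the sets $\mathbb{P}(K)^g$ with $g\in\mathrm{GL}_2(F)$. When $[F:K]=3$ it is called the three-dimensional Möbius geometry over $K$. A blocking set is a set $B$ of points such that every chain contains at least one element of $B$. *)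

(* Defs.v *)
From HB Require Import structures.
From mathcomp Require Import all_boot all_order all_algebra all_field.
Set Implicit Arguments. Unset Strict Implicit. Unset Printing Implicit Defensive.
Import GRing.Theory.
Local Open Scope ring_scope.

(* Points of the projective line P(L): the one-dimensional submodules
   L v of L^2 (row vectors), v <> 0, represented as finite sets of vectors. *)
Definition pline (L : finFieldType) (v : 'rV[L]_2) : {set 'rV[L]_2} :=
  [set c *: v | c : L].

Definition proj_points (L : finFieldType) : {set {set 'rV[L]_2}} :=
  [set pline v | v in [set v : 'rV[L]_2 | v != 0]].

(* The chain P(K)^g, where P(K) is embedded in P(L) via iota : K -> L,
   K(a,b) |-> L(iota a, iota b), and g in GL_2(L) acts on rows: L v |-> L (v g). *)
Definition chain (K L : finFieldType) (iota : {rmorphism K -> L})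
  (g : 'M[L]_2) : {set {set 'rV[L]_2}} :=
  [set pline (map_mx iota v *m g) | v in [set v : 'rV[K]_2 | v != 0]].

Definition blocking_set (K L : finFieldType) (iota : {rmorphism K -> L})
  (B : {set {set 'rV[L]_2}}) : Prop :=
  B \subset proj_points L /\
  forall g : 'M[L]_2, g \in unitmx -> exists2 x, x \in B & x \in chain iota g.

(* Main.v *)
Require Import Defs.
From HB Require Import structures.
From mathcomp Require Import all_boot all_order all_algebra all_field.
From Stdlib Require ZArith Lia.
From mathcomp Require Import zify.

Module Ar.
Import ZArith.
Import ssrnat.
Local Open Scope Z_scope.
Lemma G (q x C L A : Z) : 0 <= q -> 0 <= x -> x <= 2*q*q -> C < 0 -> L <= 0 -> A <= q*q ->
  (A <= 0 \/ L + 2*(q*q)*(q*q) <= 0) -> C + x*L + x*x*A - x*x*x < 0.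
Proof.
intros hq h0 h1 hC hL hA [h|h].
- assert (x*L <= 0) by (apply Z.mul_nonneg_nonpos; lia).
  assert (x*x*A <= 0).
  { apply Z.mul_nonneg_nonpos. apply Z.mul_nonneg_nonneg; lia. lia. }
  assert (0 <= x*x*x). { apply Z.mul_nonneg_nonneg. apply Z.mul_nonneg_nonneg; lia. lia. }
  lia.
- assert (x*x*A <= x*x*(q*q)). { apply Z.mul_le_mono_nonneg_l. apply Z.mul_nonneg_nonneg; lia. lia. }
  assert (x*x*(q*q) <= x*(2*q*q)*(q*q)).
  { apply Z.mul_le_mono_nonneg_r. apply Z.mul_nonneg_nonneg; lia. apply Z.mul_le_mono_nonneg_l; lia. }
  assert (x*(L + 2*(q*q)*(q*q)) <= 0) by (apply Z.mul_nonneg_nonpos; lia).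
  assert (0 <= x*x*x). { apply Z.mul_nonneg_nonneg. apply Z.mul_nonneg_nonneg; lia. lia. }
  assert (E : x*(2*q*q)*(q*q) + x*L = x*(L + 2*(q*q)*(q*q))) by ring.
  lia.
Qed.
Definition Pz (q b : Z) := let l := q*q+q+1 in
  b*(b-1)*(b-2) - 5 * l * b*(b-1) + 12 * l * q*q*b - 12 * l * q*q*(q*q-q+1).

Lemma C_m3 q : 2 <= q -> (-120)*1 + (-142)*q + (4)*q*q + (49)*q*q*q + (-13)*q*q*q*q < 0.
Proof.
intros hq. assert (H : q = 2 \/ 3 <= q) by lia.
repeat destruct H as [H|H]; try (subst q; lia).
set (t := q - 3). assert (ht : 0 <= t) by lia.
assert (E : (-120)*1 + (-142)*q + (4)*q*q + (49)*q*q*q + (-13)*q*q*q*q = - ((240)*1 + (199)*t + (257)*t*t + (107)*t*t*t + (13)*t*t*t*t)) by (unfold t; ring).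
rewrite E. assert (0 <= t*t) by nia. assert (0 <= t*t*t) by nia. assert (0 <= t*t*t*t) by nia.
lia.
Qed.
Lemma L_m3 q : 2 <= q -> (-82)*1 + (-69)*q + (8)*q*q + (10)*q*q*q + (-4)*q*q*q*q <= 0.
Proof.
intros hq. assert (H : 2 <= q) by lia.
set (t := q - 2). assert (ht : 0 <= t) by lia.
assert (E : (-82)*1 + (-69)*q + (8)*q*q + (10)*q*q*q + (-4)*q*q*q*q = - ((172)*1 + (45)*t + (28)*t*t + (22)*t*t*t + (4)*t*t*t*t)) by (unfold t; ring).
rewrite E. assert (0 <= t*t) by nia. assert (0 <= t*t*t) by nia. assert (0 <= t*t*t*t) by nia.
lia.
Qed.
Lemma L2_m3 q : 9 <= q -> (-82)*1 + (-69)*q + (8)*q*q + (10)*q*q*q + (-2)*q*q*q*q <= 0.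
Proof.
intros hq. assert (H : 9 <= q) by lia.
set (t := q - 9). assert (ht : 0 <= t) by lia.
assert (E : (-82)*1 + (-69)*q + (8)*q*q + (10)*q*q*q + (-2)*q*q*q*q = - ((5887)*1 + (3327)*t + (694)*t*t + (62)*t*t*t + (2)*t*t*t*t)) by (unfold t; ring).
rewrite E. assert (0 <= t*t) by nia. assert (0 <= t*t*t) by nia. assert (0 <= t*t*t*t) by nia.
lia.
Qed.
Lemma C_m2 q : 4 <= q -> (-54)*1 + (-81)*q + (-3)*q*q + (39)*q*q*q + (-9)*q*q*q*q < 0.
Proof.
intros hq. assert (H : 4 <= q) by lia.
set (t := q - 4). assert (ht : 0 <= t) by lia.
assert (E : (-54)*1 + (-81)*q + (-3)*q*q + (39)*q*q*q + (-9)*q*q*q*q = - ((234)*1 + (537)*t + (399)*t*t + (105)*t*t*t + (9)*t*t*t*t)) by (unfold t; ring).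
rewrite E. assert (0 <= t*t) by nia. assert (0 <= t*t*t) by nia. assert (0 <= t*t*t*t) by nia.
lia.
Qed.
Lemma L_m2 q : 4 <= q -> (-51)*1 + (-53)*q + (6)*q*q + (10)*q*q*q + (-4)*q*q*q*q <= 0.
Proof.
intros hq. assert (H : 4 <= q) by lia.
set (t := q - 4). assert (ht : 0 <= t) by lia.
assert (E : (-51)*1 + (-53)*q + (6)*q*q + (10)*q*q*q + (-4)*q*q*q*q = - ((551)*1 + (549)*t + (258)*t*t + (54)*t*t*t + (4)*t*t*t*t)) by (unfold t; ring).
rewrite E. assert (0 <= t*t) by nia. assert (0 <= t*t*t) by nia. assert (0 <= t*t*t*t) by nia.
lia.
Qed.
Lemma L2_m2 q : 9 <= q -> (-51)*1 + (-53)*q + (6)*q*q + (10)*q*q*q + (-2)*q*q*q*q <= 0.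
Proof.
intros hq. assert (H : 9 <= q) by lia.
set (t := q - 9). assert (ht : 0 <= t) by lia.
assert (E : (-51)*1 + (-53)*q + (6)*q*q + (10)*q*q*q + (-2)*q*q*q*q = - ((5874)*1 + (3347)*t + (696)*t*t + (62)*t*t*t + (2)*t*t*t*t)) by (unfold t; ring).
rewrite E. assert (0 <= t*t) by nia. assert (0 <= t*t*t) by nia. assert (0 <= t*t*t*t) by nia.
lia.
Qed.
Lemma C_m1 q : 7 <= q -> (-16)*1 + (-36)*q + (-8)*q*q + (29)*q*q*q + (-5)*q*q*q*q < 0.
Proof.
intros hq. assert (H : 7 <= q) by lia.
set (t := q - 7). assert (ht : 0 <= t) by lia.
assert (E : (-16)*1 + (-36)*q + (-8)*q*q + (29)*q*q*q + (-5)*q*q*q*q = - ((2718)*1 + (2745)*t + (869)*t*t + (111)*t*t*t + (5)*t*t*t*t)) by (unfold t; ring).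
rewrite E. assert (0 <= t*t) by nia. assert (0 <= t*t*t) by nia. assert (0 <= t*t*t*t) by nia.
lia.
Qed.
Lemma L_m1 q : 7 <= q -> (-26)*1 + (-37)*q + (4)*q*q + (10)*q*q*q + (-4)*q*q*q*q <= 0.
Proof.
intros hq. assert (H : 7 <= q) by lia.
set (t := q - 7). assert (ht : 0 <= t) by lia.
assert (E : (-26)*1 + (-37)*q + (4)*q*q + (10)*q*q*q + (-4)*q*q*q*q = - ((6263)*1 + (3999)*t + (962)*t*t + (102)*t*t*t + (4)*t*t*t*t)) by (unfold t; ring).
rewrite E. assert (0 <= t*t) by nia. assert (0 <= t*t*t) by nia. assert (0 <= t*t*t*t) by nia.
lia.
Qed.
Lemma L2_m1 q : 9 <= q -> (-26)*1 + (-37)*q + (4)*q*q + (10)*q*q*q + (-2)*q*q*q*q <= 0.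
Proof.
intros hq. assert (H : 9 <= q) by lia.
set (t := q - 9). assert (ht : 0 <= t) by lia.
assert (E : (-26)*1 + (-37)*q + (4)*q*q + (10)*q*q*q + (-2)*q*q*q*q = - ((5867)*1 + (3367)*t + (698)*t*t + (62)*t*t*t + (2)*t*t*t*t)) by (unfold t; ring).
rewrite E. assert (0 <= t*t) by nia. assert (0 <= t*t*t) by nia. assert (0 <= t*t*t*t) by nia.
lia.
Qed.
Lemma C_z0 q : 19 <= q -> (0)*1 + (-7)*q + (-11)*q*q + (19)*q*q*q + (-1)*q*q*q*q < 0.
Proof.
intros hq. assert (H : 19 <= q) by lia.
set (t := q - 19). assert (ht : 0 <= t) by lia.
assert (E : (0)*1 + (-7)*q + (-11)*q*q + (19)*q*q*q + (-1)*q*q*q*q = - ((4104)*1 + (7284)*t + (1094)*t*t + (57)*t*t*t + (1)*t*t*t*t)) by (unfold t; ring).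
rewrite E. assert (0 <= t*t) by nia. assert (0 <= t*t*t) by nia. assert (0 <= t*t*t*t) by nia.
lia.
Qed.
Lemma L_z0 q : 19 <= q -> (-7)*1 + (-21)*q + (2)*q*q + (10)*q*q*q + (-4)*q*q*q*q <= 0.
Proof.
intros hq. assert (H : 19 <= q) by lia.
set (t := q - 19). assert (ht : 0 <= t) by lia.
assert (E : (-7)*1 + (-21)*q + (2)*q*q + (10)*q*q*q + (-4)*q*q*q*q = - ((452378)*1 + (98859)*t + (8092)*t*t + (294)*t*t*t + (4)*t*t*t*t)) by (unfold t; ring).
rewrite E. assert (0 <= t*t) by nia. assert (0 <= t*t*t) by nia. assert (0 <= t*t*t*t) by nia.
lia.
Qed.
Lemma L2_z0 q : 19 <= q -> (-7)*1 + (-21)*q + (2)*q*q + (10)*q*q*q + (-2)*q*q*q*q <= 0.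
Proof.
intros hq. assert (H : 19 <= q) by lia.
set (t := q - 19). assert (ht : 0 <= t) by lia.
assert (E : (-7)*1 + (-21)*q + (2)*q*q + (10)*q*q*q + (-2)*q*q*q*q = - ((191736)*1 + (43987)*t + (3760)*t*t + (142)*t*t*t + (2)*t*t*t*t)) by (unfold t; ring).
rewrite E. assert (0 <= t*t) by nia. assert (0 <= t*t*t) by nia. assert (0 <= t*t*t*t) by nia.
lia.
Qed.
Lemma case_m3 q b : 2 <= q -> 0 <= b -> b <= 2*q*q - q + (-3) -> Pz q b < 0.
Proof.
intros hq hb hB. set (x := 2*q*q - q + (-3) - b).
assert (E : Pz q b = ((-120)*1 + (-142)*q + (4)*q*q + (49)*q*q*q + (-13)*q*q*q*q) + x*((-82)*1 + (-69)*q + (8)*q*q + (10)*q*q*q + (-4)*q*q*q*q) + x*x*(q*q-8*q+(-17)) - x*x*x) by (unfold Pz, x; ring).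
rewrite E. apply (G q); try lia.
- apply C_m3; lia.
- apply L_m3; lia.
- destruct (Z_le_gt_dec q 8) as [h8|h8]; [left; nia | right].
  assert (h := L2_m3 q ltac:(lia)). lia.
Qed.
Lemma case_m2 q b : 4 <= q -> 0 <= b -> b <= 2*q*q - q + (-2) -> Pz q b < 0.
Proof.
intros hq hb hB. set (x := 2*q*q - q + (-2) - b).
assert (E : Pz q b = ((-54)*1 + (-81)*q + (-3)*q*q + (39)*q*q*q + (-9)*q*q*q*q) + x*((-51)*1 + (-53)*q + (6)*q*q + (10)*q*q*q + (-4)*q*q*q*q) + x*x*(q*q-8*q+(-14)) - x*x*x) by (unfold Pz, x; ring).
rewrite E. apply (G q); try lia.
- apply C_m2; lia.
- apply L_m2; lia.
- destruct (Z_le_gt_dec q 8) as [h8|h8]; [left; nia | right].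
  assert (h := L2_m2 q ltac:(lia)). lia.
Qed.
Lemma case_m1 q b : 7 <= q -> 0 <= b -> b <= 2*q*q - q + (-1) -> Pz q b < 0.
Proof.
intros hq hb hB. set (x := 2*q*q - q + (-1) - b).
assert (E : Pz q b = ((-16)*1 + (-36)*q + (-8)*q*q + (29)*q*q*q + (-5)*q*q*q*q) + x*((-26)*1 + (-37)*q + (4)*q*q + (10)*q*q*q + (-4)*q*q*q*q) + x*x*(q*q-8*q+(-11)) - x*x*x) by (unfold Pz, x; ring).
rewrite E. apply (G q); try lia.
- apply C_m1; lia.
- apply L_m1; lia.
- destruct (Z_le_gt_dec q 8) as [h8|h8]; [left; nia | right].
  assert (h := L2_m1 q ltac:(lia)). lia.
Qed.
Lemma case_z0 q b : 19 <= q -> 0 <= b -> b <= 2*q*q - q + (0) -> Pz q b < 0.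
Proof.
intros hq hb hB. set (x := 2*q*q - q + (0) - b).
assert (E : Pz q b = ((0)*1 + (-7)*q + (-11)*q*q + (19)*q*q*q + (-1)*q*q*q*q) + x*((-7)*1 + (-21)*q + (2)*q*q + (10)*q*q*q + (-4)*q*q*q*q) + x*x*(q*q-8*q+(-8)) - x*x*x) by (unfold Pz, x; ring).
rewrite E. apply (G q); try lia.
- apply C_z0; lia.
- apply L_z0; lia.
- destruct (Z_le_gt_dec q 8) as [h8|h8]; [left; nia | right].
  assert (h := L2_z0 q ltac:(lia)). lia.
Qed.
Local Close Scope Z_scope.

Lemma z3 (b N : nat) : Z.of_nat (b * ((b - 1) * ((b - 2) * N)))%nat =
  (Z.of_nat b * (Z.of_nat b - 1) * (Z.of_nat b - 2) * Z.of_nat N)%Z.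
Proof. case: b => [|[|b]]; rewrite ?subSS ?subn0; lia. Qed.

Lemma z2 (b X : nat) : Z.of_nat (b * ((b - 1) * X))%nat =
  (Z.of_nat b * (Z.of_nat b - 1) * Z.of_nat X)%Z.
Proof. case: b => [|b]; rewrite ?subSS ?subn0; lia. Qed.

Lemma Zm (a c : nat) : Z.of_nat (a * c)%nat = (Z.of_nat a * Z.of_nat c)%Z.
Proof. lia. Qed.

Lemma final (q b N T3g T2g T1g c0 : nat) : (2 <= q)%nat -> (0 < N)%nat ->
  (5 * T2g + 12 * c0 <= T3g + 12 * T1g)%nat ->
  T3g = (b * ((b - 1) * ((b - 2) * N)))%nat ->
  (T2g * (q - 1) = b * ((b - 1) * ((q ^ 3 - 1) * N)))%nat ->
  (T1g * q * (q - 1) = b * (q ^ 3 * ((q ^ 3 - 1) * N)))%nat ->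
  (c0 * (q + 1) * q * (q - 1) = (q ^ 3 + 1) * (q ^ 3 * ((q ^ 3 - 1) * N)))%nat ->
  (0 <= Pz (Z.of_nat q) (Z.of_nat b))%Z.
Proof.
move=> q2 N0 H E3 E2 E1 E0.
have Zqm : Z.of_nat (q - 1) = (Z.of_nat q - 1)%Z by lia.
have Zq1 : Z.of_nat (q + 1) = (Z.of_nat q + 1)%Z by lia.
have ZQ : Z.of_nat (q ^ 3) = (Z.of_nat q * Z.of_nat q * Z.of_nat q)%Z.
  by rewrite !expnS expn0 muln1 !Zm; lia.
have ZR : Z.of_nat (q ^ 3 - 1) = (Z.of_nat q * Z.of_nat q * Z.of_nat q - 1)%Z.
  have : (1 <= q ^ 3)%nat by rewrite expn_gt0; lia.
  move: ZQ; lia.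
have ZQ1 : Z.of_nat (q ^ 3 + 1) = (Z.of_nat q * Z.of_nat q * Z.of_nat q + 1)%Z.
  by move: ZQ; lia.
have H' : (5 * Z.of_nat T2g + 12 * Z.of_nat c0 <= Z.of_nat T3g + 12 * Z.of_nat T1g)%Z by lia.
move: (q ^ 3)%nat ZQ ZR ZQ1 E2 E1 E0 => Q3 ZQ ZR ZQ1 E2 E1 E0.
have F3 := f_equal Z.of_nat E3; rewrite z3 in F3.
have F2 := f_equal Z.of_nat E2; rewrite z2 !Zm Zqm ZR in F2.
have F1 := f_equal Z.of_nat E1; rewrite !Zm Zqm ZR ZQ in F1.
have F0 := f_equal Z.of_nat E0; rewrite !Zm Zqm Zq1 ZR ZQ ZQ1 in F0.
set qz := Z.of_nat q in Zqm Zq1 ZQ ZR ZQ1 F2 F1 F0 *.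
set bz := Z.of_nat b in F3 F2 F1 F0 *.
set Nz := Z.of_nat N in F3 F2 F1 F0 *.
set t3 := Z.of_nat T3g in H' F3. set t2 := Z.of_nat T2g in H' F2.
set t1 := Z.of_nat T1g in H' F1. set c := Z.of_nat c0 in H' F0.
have qz2 : (2 <= qz)%Z by rewrite /qz; lia.
have Nz0 : (0 < Nz)%Z by rewrite /Nz; lia.
destruct (Z_lt_le_dec (Pz qz bz) 0) as [hneg|]; last by [].
exfalso.
have X2 : ((qz+1)*qz*(qz-1)*(t3 + 12*t1 - 5*t2 - 12*c) =
  (qz+1)*qz*(qz-1)*t3 + 12*(qz+1)*(t1*qz*(qz-1)) - 5*(qz+1)*qz*(t2*(qz-1))
  - 12*(c*(qz+1)*qz*(qz-1)))%Z by ring.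
rewrite F1 F2 F0 F3 in X2.
have X3 : ((qz+1)*qz*(qz-1)*(t3 + 12*t1 - 5*t2 - 12*c) = ((qz+1)*qz*(qz-1)*Nz) * Pz qz bz)%Z.
  by rewrite F3 X2 /Pz; ring.
have P1 : (0 < (qz+1)*qz*(qz-1)*Nz)%Z.
  apply: Z.mul_pos_pos => //; apply: Z.mul_pos_pos; [apply: Z.mul_pos_pos|]; lia.
have P2 : (0 <= (qz+1)*qz*(qz-1)*(t3 + 12*t1 - 5*t2 - 12*c))%Z.
  apply: Z.mul_nonneg_nonneg; [|lia]; apply: Z.mul_nonneg_nonneg; [apply: Z.mul_nonneg_nonneg|]; lia.
have P3 : (((qz+1)*qz*(qz-1)*Nz) * Pz qz bz < 0)%Z by apply: Z.mul_pos_neg.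
lia.
Qed.

Lemma bounds (q b : nat) : (2 <= q)%nat -> (0 <= Pz (Z.of_nat q) (Z.of_nat b))%Z ->
  [/\ (2 * q ^ 2 - q - 2 <= b)%nat,
      (4 <= q)%nat -> (2 * q ^ 2 - q - 1 <= b)%nat,
      (7 <= q)%nat -> (2 * q ^ 2 - q <= b)%nat
    & (19 <= q)%nat -> (2 * q ^ 2 - q + 1 <= b)%nat].
Proof.
move=> q2 hP; rewrite -mulnn; split => [|h|h|h]; rewrite leqNgt; apply/negP => hb;
  have qq : (q <= q * q)%nat by rewrite leq_pmulr // ltnW.
all: try (have := case_m3 (Z.of_nat q) (Z.of_nat b); lia).
all: try (have := case_m2 (Z.of_nat q) (Z.of_nat b); lia).
all: try (have := case_m1 (Z.of_nat q) (Z.of_nat b); lia).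
all: try (have := case_z0 (Z.of_nat q) (Z.of_nat b); lia).
Qed.

End Ar.
Import Ar.

From mathcomp Require Import ring.
Set Implicit Arguments. Unset Strict Implicit. Unset Printing Implicit Defensive.
Import GRing.Theory.

Section PartP1.
Local Open Scope ring_scope.

Lemma det22 (R : comNzRingType) (A : 'M[R]_2) : \det A = A 0 0 * A 1 1 - A 0 1 * A 1 0.
Proof.
rewrite (expand_det_row _ 0) big_ord_recl big_ord1 /cofactor !det_mx11 !mxE /=.
rewrite !expr0 expr1 !mul1r mulN1r mulrN.
by congr (_ * _ - _ * _); congr (A _ _); apply/val_inj.
Qed.
Lemma ord2P (j : 'I_2) : j = 0 \/ j = 1.
Proof. by case: j => [[|[|//]]] Hj; [left|right]; apply/val_inj. Qed.
Lemma row2P (R : Type) (u v : 'rV[R]_2) : u 0 0 = v 0 0 -> u 0 1 = v 0 1 -> u = v.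
Proof. move=> h0 h1; apply/matrixP => i j; rewrite (ord1 i); by case: (ord2P j) => ->. Qed.

Lemma card_fibers (A B : finType) (f : A -> B) (D : {set A}) m :
  (forall x, x \in D -> #|[set y in D | f y == f x]| = m) -> #|D| = (#|f @: D| * m)%N.
Proof.
move=> Hf; rewrite -sum1_card (partition_big_imset f) /= -sum_nat_const.
apply: eq_bigr => j /imsetP [x xD ->].
by rewrite sum1dep_card -(Hf x xD); apply: eq_card => y; rewrite inE.
Qed.

Section Geo.
Variable L : finFieldType.
Implicit Types (u v w : 'rV[L]_2) (h g : 'M[L]_2).

Lemma pline_mem v : v \in pline v.
Proof. by apply/imsetP; exists 1; rewrite ?inE ?scale1r. Qed.

Lemma pline_scale c v : c != 0 -> pline (c *: v) = pline v.
Proof.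
move=> c0; apply/setP => w; apply/imsetP/imsetP => -[d _ ->].
  by exists (d * c); rewrite ?inE ?scalerA.
by exists (d / c); rewrite ?inE // scalerA divfK.
Qed.

Lemma plineP u v : u != 0 -> pline u = pline v -> exists2 c, c != 0 & u = c *: v.
Proof.
move=> u0 E; have := pline_mem u; rewrite E => /imsetP [c _ uE].
exists c => //; apply: contraNneq u0 => c0; by rewrite uE c0 scale0r.
Qed.

Lemma scaleIv v : v != 0 -> injective (fun c : L => c *: v).
Proof.
move=> v0 c d /eqP; rewrite -subr_eq0 -scalerBl scaler_eq0 (negPf v0) orbF subr_eq0.
by move/eqP.
Qed.

Lemma card_nz (F : finType) (z : F) : #|[set c : F | c != z]| = #|F|.-1.
Proof. by rewrite -(cardsC1 z); apply: eq_card => c; rewrite !inE. Qed.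

Lemma card_points : #|proj_points L| = (#|L| + 1)%N.
Proof.
set Q := #|L|.
have Q1 : (1 < Q)%N by have := max_card [set (0:L); 1]; rewrite cards2 eq_sym oner_eq0.
have H := @card_fibers _ _ (@pline L) [set v : 'rV[L]_2 | v != 0] Q.-1.
rewrite card_nz card_mx /= in H.
have {}H : (Q ^ 2).-1 = (#|proj_points L| * Q.-1)%N.
  apply: H => v; rewrite inE => v0.
  rewrite -(card_nz (0:L)) -(card_imset _ (scaleIv v0)); apply: eq_card => w.
  rewrite !inE; apply/andP/imsetP => [[w0 /eqP E]|[c c0 ->]].
    have [c c0 ->] := plineP w0 E; by exists c; rewrite ?inE.
  rewrite inE in c0; rewrite scaler_eq0 negb_or c0 v0 pline_scale //.
have : ((Q + 1) * Q.-1 = #|proj_points L| * Q.-1)%N.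
  by rewrite -H; case: Q Q1 {H} => // n _; rewrite /=; nia.
move/eqP; rewrite eqn_pmul2r; [by move/eqP<- | lia].
Qed.
End Geo.

End PartP1.

Section PartP2.
Local Open Scope ring_scope.

Section Chain.
Variables (K L : finFieldType) (iota : {rmorphism K -> L}).

Lemma nz_row2 (F : nzRingType) (v : 'rV[F]_2) : v != 0 -> exists j, v 0 j != 0.
Proof.
move=> v0; case: (eqVneq (v 0 0) 0) => [h0|]; last by exists 0.
case: (eqVneq (v 0 1) 0) => [h1|]; last by exists 1.
have : v = 0 by apply: row2P; rewrite mxE.
by move=> E; rewrite E eqxx in v0.
Qed.

Lemma chain_sub g : g \in unitmx -> chain iota g \subset proj_points L.
Proof.
move=> gU; apply/subsetP => x /imsetP [v]; rewrite inE => v0 ->.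
apply/imsetP; exists ((map_mx iota v) *m g) => //; rewrite inE.
apply: contra v0 => /eqP E; have : (map_mx iota v) *m g *m invmx g == 0 by rewrite E mul0mx.
by rewrite mulmxK // map_mx_eq0.
Qed.

Lemma card_chain g : g \in unitmx -> #|chain iota g| = (#|K| + 1)%N.
Proof.
move=> gU; set q := #|K|.
have q1 : (1 < q)%N by have := max_card [set (0:K); 1]; rewrite cards2 eq_sym oner_eq0.
set f := fun v : 'rV[K]_2 => pline ((map_mx iota v) *m g).
have H := @card_fibers _ _ f [set v : 'rV[K]_2 | v != 0] q.-1.
rewrite card_nz card_mx /= in H.
have {}H : (q ^ 2).-1 = (#|chain iota g| * q.-1)%N.
  apply: H => v; rewrite inE => v0.
  rewrite -(card_nz (0:K)) -(card_imset _ (scaleIv v0)); apply: eq_card => w.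
  rewrite !inE; apply/andP/imsetP => [[w0 /eqP E]|[c c0 ->]].
    have wi0 : (map_mx iota w) *m g != 0.
      apply: contra w0 => /eqP E0; have : (map_mx iota w) *m g *m invmx g == 0 by rewrite E0 mul0mx.
      by rewrite mulmxK // map_mx_eq0.
    have [c c0 Ec] := plineP wi0 E.
    have Ew : (map_mx iota w) = c *: (map_mx iota v).
      by rewrite -[map_mx iota w](mulmxK gU) Ec -scalemxAl mulmxK.
    have [j vj] := nz_row2 v0.
    have Ec' : c = iota (w 0 j / v 0 j).
      have := congr1 (fun A : 'M[L]_(1,2) => A 0 j) Ew; rewrite !mxE => h.
      by rewrite fmorph_div h mulfK // fmorph_eq0.
    have Hw : w = (w 0 j / v 0 j) *: v.
      have Hj : forall i, w 0 i = (w 0 j / v 0 j) * v 0 i.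
        move=> i; apply: (fmorph_inj iota); rewrite rmorphM /= -Ec'.
        by have := congr1 (fun A : 'M[L]_(1,2) => A 0 i) Ew; rewrite !mxE.
      by apply: row2P; rewrite mxE Hj.
    exists (w 0 j / v 0 j); rewrite // inE.
    by apply: contra w0 => /eqP c0'; rewrite Hw c0' scale0r.
  rewrite inE in c0; rewrite scaler_eq0 negb_or c0 v0 /f map_mxZ -scalemxAl pline_scale //.
  by rewrite fmorph_eq0.
have : ((q + 1) * q.-1 = #|chain iota g| * q.-1)%N.
  by rewrite -H; case: q q1 {H f} => // n _; rewrite /=; nia.
move/eqP; rewrite eqn_pmul2r; [by move/eqP<- | lia].
Qed.
End Chain.

End PartP2.

Section PartP3.
Local Open Scope ring_scope.

Section Act.
Variables (K L : finFieldType) (iota : {rmorphism K -> L}).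
Implicit Types (u v w : 'rV[L]_2) (h g : 'M[L]_2) (x y z P : {set 'rV[L]_2}).

Definition act h P : {set 'rV[L]_2} := [set w *m h | w in P].

Lemma act_pline h v : act h (pline v) = pline (v *m h).
Proof.
apply/setP => w; apply/imsetP/imsetP => [[w' /imsetP [c _ ->] ->]|[c _ ->]].
  by exists c; rewrite // -scalemxAl.
by exists (c *: v); [apply/imsetP; exists c|rewrite -scalemxAl].
Qed.

Lemma actK h P : h \in unitmx -> act (invmx h) (act h P) = P.
Proof.
move=> hU; rewrite /act -imset_comp; rewrite (eq_imset (g := id)) ?imset_id //.
by move=> w /=; rewrite mulmxK.
Qed.

Lemma chain_mul g h : chain iota (g *m h) = act h @: chain iota g.
Proof.
rewrite /chain -imset_comp; apply: eq_imset => v /=.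
by rewrite act_pline mulmxA.
Qed.

Lemma mem_chain_mul g h x : h \in unitmx ->
  (act h x \in chain iota (g *m h)) = (x \in chain iota g).
Proof.
move=> hU; rewrite chain_mul; apply/imsetP/idP => [[P PC E]|xC]; last by exists x.
by have := congr1 (act (invmx h)) E; rewrite !actK // => ->.
Qed.

Definition cnt3 x y z := #|[set g | (g \in unitmx) &&
   [&& x \in chain iota g, y \in chain iota g & z \in chain iota g]]|.

Lemma cnt3_le h x y z : h \in unitmx ->
  (cnt3 x y z <= cnt3 (act h x) (act h y) (act h z))%N.
Proof.
move=> hU; rewrite /cnt3 -(card_imset _ (can_inj (mulmxK hU))).
apply: subset_leq_card; apply/subsetP => _ /imsetP [g gS ->].
by move: gS; rewrite !inE unitmx_mul hU !mem_chain_mul // andbT.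
Qed.

Lemma cnt3_act h x y z : h \in unitmx ->
  cnt3 (act h x) (act h y) (act h z) = cnt3 x y z.
Proof.
move=> hU; apply/eqP; rewrite eqn_leq cnt3_le // andbT.
have hU' : invmx h \in unitmx by rewrite unitmx_inv.
by have := cnt3_le (act h x) (act h y) (act h z) hU'; rewrite !actK.
Qed.

Definition e0 : 'rV[L]_2 := delta_mx 0 0.
Definition e1 : 'rV[L]_2 := delta_mx 0 1.
Definition p1 := pline e0.
Definition p2 := pline e1.
Definition p3 := pline (e0 + e1).

Lemma indep u1 u2 : u1 != 0 -> u2 != 0 -> pline u1 != pline u2 ->
  u1 0 0 * u2 0 1 - u1 0 1 * u2 0 0 != 0.
Proof.
move=> n1 n2; apply: contraNneq => /eqP; rewrite subr_eq0 => /eqP D.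
have [j uj] := nz_row2 n1.
have E : u2 = (u2 0 j / u1 0 j) *: u1.
  apply: row2P; rewrite !mxE; case: (ord2P j) => Ej; rewrite Ej in uj *.
  - by rewrite divfK.
  - by rewrite mulrAC [u2 0 1 * _]mulrC D mulrAC divff // mul1r.
  - by rewrite mulrAC [u2 0 0 * _]mulrC -D mulrAC divff // mul1r.
  - by rewrite divfK.
have k0 : u2 0 j / u1 0 j != 0.
  by apply: contra n2 => /eqP k0; rewrite E k0 scale0r.
by rewrite E pline_scale.
Qed.

Lemma pts_rep x : x \in proj_points L -> exists2 u, u != 0 & x = pline u.
Proof. by case/imsetP => u; rewrite inE => u0 ->; exists u. Qed.

Lemma trans3 x y z : x \in proj_points L -> y \in proj_points L -> z \in proj_points L ->
  x != y -> x != z -> y != z ->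
  exists2 h, h \in unitmx & [/\ x = act h p1, y = act h p2 & z = act h p3].
Proof.
move=> /pts_rep [u1 n1 ->] /pts_rep [u2 n2 ->] /pts_rep [u3 n3 ->] xy xz yz.
have D0 := indep n1 n2 xy.
set D := u1 0 0 * u2 0 1 - u1 0 1 * u2 0 0 in D0.
set al := (u3 0 0 * u2 0 1 - u3 0 1 * u2 0 0) / D.
set be := (u1 0 0 * u3 0 1 - u1 0 1 * u3 0 0) / D.
have E3 : u3 = al *: u1 + be *: u2.
  apply: row2P; rewrite !mxE /al /be /D; field; exact: D0.
have al0 : al != 0.
  apply: contraNneq yz => a0; move: E3; rewrite a0 scale0r add0r => E3.
  have b0 : be != 0 by apply: contra n3 => /eqP b0; rewrite E3 b0 scale0r.
  by rewrite E3 pline_scale.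
have be0 : be != 0.
  apply: contraNneq xz => b0; move: E3; rewrite b0 scale0r addr0 => E3.
  by rewrite E3 pline_scale.
pose h : 'M[L]_2 := \matrix_(i, j) (if i == 0 then al * u1 0 j else be * u2 0 j).
have r0 : e0 *m h = al *: u1 by rewrite /e0 -rowE; apply: row2P; rewrite !mxE.
have r1 : e1 *m h = be *: u2 by rewrite /e1 -rowE; apply: row2P; rewrite !mxE.
exists h.
  rewrite unitmxE unitfE det22 !mxE /=.
  have -> : al * u1 0 0 * (be * u2 0 1) - al * u1 0 1 * (be * u2 0 0) = al * be * D.
    by rewrite /D; ring.
  by apply: mulf_neq0; first apply: mulf_neq0.
by rewrite /p1 /p2 /p3 !act_pline mulmxDl r0 r1 -E3 !pline_scale.
Qed.
End Act.

End PartP3.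

Section PartP4.

Lemma wdc (M T : finType) (P : pred M) (R : M -> T -> bool) (D : {set T}) (W : M -> nat) :
  \sum_(t in D) \sum_(g | P g && R g t) W g = \sum_(g | P g) #|[set t in D | R g t]| * W g.
Proof.
transitivity (\sum_(t in D) \sum_(g | P g) (if R g t then W g else 0)).
  by apply: eq_bigr => t _; rewrite big_mkcondr.
rewrite exchange_big; apply: eq_bigr => g _.
by rewrite -big_mkcondr -sum_nat_const; apply: eq_bigl => t; rewrite !inE.
Qed.

Section Count.
Variables (K L : finFieldType) (iota : {rmorphism K -> L}).
Local Notation M := ('M[L]_2).
Local Notation Pts := (proj_points L).
Local Notation U := (fun g : M => g \in unitmx).
Local Notation inc g x := (x \in chain iota g).

Definition c0 := \sum_(g : M | U g) 1.
Definition c1 x := \sum_(g : M | U g && inc g x) 1.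
Definition c2 x y := \sum_(g : M | U g && inc g x && inc g y) 1.
Definition c3 x y z := \sum_(g : M | U g && inc g x && inc g y && inc g z) 1.
Definition N3 := cnt3 iota (p1 L) (p2 L) (p3 L).

Lemma c3_const x y z : x \in Pts -> y \in Pts -> z \in Pts ->
  x != y -> x != z -> y != z -> c3 x y z = N3.
Proof.
move=> xP yP zP xy xz yz; have [h hU [-> -> ->]] := trans3 xP yP zP xy xz yz.
rewrite /N3 -(cnt3_act iota _ _ _ hU) /cnt3 /c3 sum1dep_card; apply: eq_card => g.
by rewrite !inE -!andbA.
Qed.

Lemma card_sub2 (T : finType) (S : {set T}) x y : x \in S -> y \in S -> x != y ->
  #|S :\ x :\ y| = (#|S| - 2)%N.
Proof.
move=> xS yS xy; rewrite (cardsD1 x S) xS (cardsD1 y (S :\ x)) !inE eq_sym xy yS /=.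
by rewrite add1n subSS subn1 add1n.
Qed.

Lemma card_sub1 (T : finType) (S : {set T}) x : x \in S -> #|S :\ x| = (#|S| - 1)%N.
Proof. by move=> xS; rewrite (cardsD1 x S) xS add1n subn1. Qed.

Hypothesis HL : #|L| = (#|K| ^ 3)%N.
Let q := #|K|.
Let Q := #|L|.

Lemma rel32 x y : x \in Pts -> y \in Pts -> x != y ->
  (c2 x y * (q - 1) = (Q - 1) * N3)%N.
Proof.
move=> xP yP xy.
have E1 : \sum_(z in Pts :\ x :\ y) c3 x y z = ((Q - 1) * N3)%N.
  rewrite (eq_bigr (fun _ => N3)); first by rewrite sum_nat_const (card_sub2 xP yP xy) card_points; congr (_ * _)%N; rewrite /Q; lia.
  move=> z; rewrite !inE => /and3P [zy zx zP]; apply: c3_const => //; by rewrite eq_sym.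
rewrite -E1 /c3 wdc /c2 big_distrl /=; apply: eq_bigr => g /andP [/andP [gU xg] yg].
rewrite muln1 mul1n.
have -> : [set t in Pts :\ x :\ y | t \in chain iota g] = chain iota g :\ x :\ y.
  apply/setP => t; rewrite !inE; case tg: (t \in chain iota g); rewrite ?andbF ?andbT //.
  by rewrite (subsetP (chain_sub iota gU) t tg) ?andbT.
by rewrite (card_sub2 xg yg xy) card_chain // /q; lia.
Qed.

Lemma rel21 x : x \in Pts -> (c1 x * q * (q - 1) = Q * ((Q - 1) * N3))%N.
Proof.
move=> xP.
have E1 : \sum_(y in Pts :\ x) c2 x y * (q - 1) = (Q * ((Q - 1) * N3))%N.
  rewrite (eq_bigr (fun _ => (Q - 1) * N3)%N).
    by rewrite sum_nat_const (card_sub1 xP) card_points; congr (_ * _)%N; rewrite /Q; lia.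
  move=> y; rewrite !inE => /andP [yx yP]; apply: rel32 => //; by rewrite eq_sym.
rewrite -E1 -big_distrl /=; congr (_ * _)%N.
rewrite /c2 wdc /c1 big_distrl /=; apply: eq_bigr => g /andP [gU xg].
rewrite muln1 mul1n.
have -> : [set t in Pts :\ x | t \in chain iota g] = chain iota g :\ x.
  apply/setP => t; rewrite !inE; case tg: (t \in chain iota g); rewrite ?andbF ?andbT //.
  by rewrite (subsetP (chain_sub iota gU) t tg) ?andbT.
by rewrite (card_sub1 xg) card_chain // /q; lia.
Qed.

Lemma rel10 : (c0 * (q + 1) * q * (q - 1) = (Q + 1) * (Q * ((Q - 1) * N3)))%N.
Proof.
have E1 : \sum_(x in Pts) c1 x * q * (q - 1) = ((Q + 1) * (Q * ((Q - 1) * N3)))%N.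
  rewrite (eq_bigr (fun _ => Q * ((Q - 1) * N3)))%N; last by move=> x xP; apply: rel21.
  by rewrite sum_nat_const card_points.
rewrite -E1 -!big_distrl /=; congr (_ * _ * _)%N.
rewrite /c1.
have := wdc (fun g : M => g \in unitmx) (fun g t => t \in chain iota g) Pts (fun _ => 1%N).
move=> ->; rewrite /c0 big_distrl /=; apply: eq_bigr => g gU.
rewrite muln1 mul1n.
have -> : [set t in Pts | t \in chain iota g] = chain iota g.
  apply/setP => t; rewrite !inE; case tg: (t \in chain iota g); rewrite ?andbF ?andbT //.
  by rewrite (subsetP (chain_sub iota gU) t tg) ?andbT.
by rewrite card_chain.
Qed.
End Count.

End PartP4.

Section PartP5.

Section Sums.
Variables (K L : finFieldType) (iota : {rmorphism K -> L}).
Local Notation M := ('M[L]_2).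
Local Notation Pts := (proj_points L).
Variable B : {set {set 'rV[L]_2}}.
Definition iB (g : M) := #|[set t in B | t \in chain iota g]|.

Lemma T3 : \sum_(x in B) \sum_(y in B :\ x) \sum_(z in B :\ x :\ y) c3 iota x y z
  = \sum_(g : M | g \in unitmx) iB g * ((iB g - 1) * (iB g - 2)).
Proof.
have S1 : forall x y, x \in B -> y \in B :\ x ->
  \sum_(z in B :\ x :\ y) c3 iota x y z =
  \sum_(g : M | (g \in unitmx) && (x \in chain iota g) && (y \in chain iota g)) (iB g - 2).
  move=> x y xB; rewrite !inE => /andP [yx yB].
  rewrite /c3 wdc; apply: eq_bigr => g /andP [/andP [gU xg] yg].
  rewrite muln1 /iB.
  have -> : [set t in B :\ x :\ y | t \in chain iota g] = [set t in B | t \in chain iota g] :\ x :\ y.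
    by apply/setP => t; rewrite !inE !andbA.
  by apply: card_sub2; rewrite ?inE ?xB ?yB ?xg ?yg // eq_sym.
have S2 : forall x, x \in B ->
  \sum_(y in B :\ x) \sum_(z in B :\ x :\ y) c3 iota x y z =
  \sum_(g : M | (g \in unitmx) && (x \in chain iota g)) ((iB g - 1) * (iB g - 2)).
  move=> x xB; rewrite (eq_bigr _ (fun y yB => S1 x y xB yB)) wdc; apply: eq_bigr => g /andP [gU xg].
  have -> : [set t in B :\ x | t \in chain iota g] = [set t in B | t \in chain iota g] :\ x.
    by apply/setP => t; rewrite !inE !andbA.
  by rewrite card_sub1 // inE xB xg.
rewrite (eq_bigr _ S2) wdc; apply: eq_bigr => g gU.
by congr (_ * _)%N; apply: eq_card => t; rewrite !inE.
Qed.

Lemma T2 : \sum_(x in B) \sum_(y in B :\ x) c2 iota x y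
  = \sum_(g : M | g \in unitmx) iB g * (iB g - 1).
Proof.
have S2 : forall x, x \in B ->
  \sum_(y in B :\ x) c2 iota x y =
  \sum_(g : M | (g \in unitmx) && (x \in chain iota g)) (iB g - 1).
  move=> x xB; rewrite /c2 wdc; apply: eq_bigr => g /andP [gU xg].
  have -> : [set t in B :\ x | t \in chain iota g] = [set t in B | t \in chain iota g] :\ x.
    by apply/setP => t; rewrite !inE !andbA.
  by rewrite muln1 card_sub1 // inE xB xg.
rewrite (eq_bigr _ S2) wdc; apply: eq_bigr => g gU.
by congr (_ * _)%N; apply: eq_card => t; rewrite !inE.
Qed.

Lemma T1 : \sum_(x in B) c1 iota x = \sum_(g : M | g \in unitmx) iB g.
Proof.
rewrite /c1.
have := wdc (fun g : M => g \in unitmx) (fun g t => t \in chain iota g) B (fun _ => 1%N).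
move=> ->; apply: eq_bigr => g _; rewrite muln1.
by apply: eq_card => t; rewrite !inE.
Qed.

Hypothesis BP : B \subset Pts.
Hypothesis HL : #|L| = (#|K| ^ 3)%N.

Lemma V3 : \sum_(x in B) \sum_(y in B :\ x) \sum_(z in B :\ x :\ y) c3 iota x y z
  = (#|B| * ((#|B| - 1) * ((#|B| - 2) * N3 iota)))%N.
Proof.
rewrite (eq_bigr (fun _ => (#|B| - 1) * ((#|B| - 2) * N3 iota))%N) ?sum_nat_const //.
move=> x xB; rewrite (eq_bigr (fun _ => ((#|B| - 2) * N3 iota))%N).
  by rewrite sum_nat_const card_sub1.
move=> y; rewrite !inE => /andP [yx yB].
rewrite (eq_bigr (fun _ => N3 iota)).
  by rewrite sum_nat_const card_sub2 // ?inE ?yx ?yB // eq_sym.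
move=> z; rewrite !inE => /and3P [zy zx zB].
apply: c3_const; rewrite ?(subsetP BP) // eq_sym //.
Qed.

Lemma V2 : \sum_(x in B) \sum_(y in B :\ x) c2 iota x y * (#|K| - 1)
  = (#|B| * ((#|B| - 1) * ((#|L| - 1) * N3 iota)))%N.
Proof.
rewrite (eq_bigr (fun _ => (#|B| - 1) * ((#|L| - 1) * N3 iota))%N) ?sum_nat_const //.
move=> x xB; rewrite (eq_bigr (fun _ => ((#|L| - 1) * N3 iota))%N) /=.
  by rewrite sum_nat_const card_sub1.
move=> y; rewrite !inE => /andP [yx yB].
by apply: rel32; rewrite ?(subsetP BP) // eq_sym.
Qed.

Lemma V1 : \sum_(x in B) c1 iota x * #|K| * (#|K| - 1)
  = (#|B| * (#|L| * ((#|L| - 1) * N3 iota)))%N.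
Proof.
rewrite (eq_bigr (fun _ => (#|L| * ((#|L| - 1) * N3 iota)))%N) ?sum_nat_const //.
by move=> x xB; apply: rel21; rewrite ?(subsetP BP).
Qed.
End Sums.

End PartP5.


Lemma pointwise (i : nat) : (0 < i)%N -> (5 * (i * (i - 1)) + 12 <= i * ((i - 1) * (i - 2)) + 12 * i)%N.
Proof. case: i => [|[|[|[|[|i]]]]] // _; rewrite ?subSS ?subn0; nia. Qed.

Theorem mainTheorem4 (K L : finFieldType) (iota : {rmorphism K -> L})
  (HL : #|L| = (#|K| ^ 3)%N) (B : {set {set 'rV[L]_2}}) :
  blocking_set iota B ->
  let q := #|K| in
  [/\ (2 * q ^ 2 - q - 2 <= #|B|)%N,
      (4 <= q)%N -> (2 * q ^ 2 - q - 1 <= #|B|)%N,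
      (7 <= q)%N -> (2 * q ^ 2 - q <= #|B|)%N
    & (19 <= q)%N -> (2 * q ^ 2 - q + 1 <= #|B|)%N].
Proof.
move=> [BP HB] q.
have q2 : (2 <= q)%N by have := max_card [set (0%R : K); 1%R]; rewrite cards2 eq_sym GRing.oner_eq0.
apply: bounds => //.
set T3g := \sum_(g : 'M[L]_2 | g \in unitmx) iB iota B g * ((iB iota B g - 1) * (iB iota B g - 2)).
set T2g := \sum_(g : 'M[L]_2 | g \in unitmx) iB iota B g * (iB iota B g - 1).
set T1g := \sum_(g : 'M[L]_2 | g \in unitmx) iB iota B g.
have Hin : (5 * T2g + 12 * c0 L <= T3g + 12 * T1g)%N.
  rewrite /T3g /T2g /T1g /c0 !big_distrr -!big_split /=.
  apply: leq_sum => g gU; rewrite muln1; apply: pointwise.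
  have [x xB xc] := HB g gU; rewrite /iB card_gt0; apply/set0Pn; exists x; by rewrite inE xB.
apply: (@final q #|B| (N3 iota) T3g T2g T1g (c0 L) q2).
- have c0pos : (0 < c0 L)%N by rewrite /c0 (bigD1 (1%:M)%R) ?unitmx1.
  rewrite lt0n; apply/eqP => N0; have := rel10 iota HL; rewrite N0 !muln0 => E.
  have : (0 < c0 L * (#|K| + 1) * #|K| * (#|K| - 1))%N.
    by rewrite !muln_gt0 c0pos addn1 /= -/q; lia.
  by rewrite E.
- exact: Hin.
- by rewrite /T3g -T3 V3.
- by rewrite /T2g -T2 big_distrl /= -HL -(V2 iota BP HL); apply: eq_bigr => x _; rewrite big_distrl.
- by rewrite /T1g -T1 !big_distrl /= -HL -(V1 iota BP HL).
- by rewrite -HL; apply: (rel10 iota HL).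
Qed.
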